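(* Let $\Delta$ (vertex set $V$, field $K=k(a_{i,j}:1\le i\le d, j\in V)$, degree map $\deg_\Delta$) and $\Delta'$ (vertex set $V'$, field $K'=k(a'_{i,j}:1\le i\le d, j\in V')$, degree map $\deg_{\Delta'}$) be two connected oriented simplicial $k$-homology manifolds of dimension $d-1$. Let $G=\{j_1,\dots,j_s\}$ be a face of $\Delta$ and $G'=\{j_1',\dots,j_s'\}$ a face of $\Delta'$, let $S$ be the vertex set of the closed star $\mathrm{Star}_\Delta(G)$, and let $K_S=k(a_{i,j}:1\le i\le d,\ j\in S)\subseteq K$. Suppose $\tau:\mathrm{Star}_\Delta(G)\to\mathrm{Star}_{\Delta'}(G')$ is an isomorphism of simplicial complexes with $\tau(j_m)=j'_m$ for $1\le m\le s$, and identify $K_S$ with a subfield of $K'$ via $a_{i,j}\mapsto a'_{i,\tau(j)}$. Let $b_1,\dots,b_s$ be positive integers with $b_1+\dots+b_s=d$. Then $\deg_\Delta(x_{j_1}^{b_1}\cdots x_{j_s}^{b_s})\in K_S$, and under this identification $$\deg_\Delta(x_{j_1}^{b_1}\cdots x_{j_s}^{b_s})=\epsilon\,\deg_{\Delta'}(x_{j_1'}^{b_1}\cdots x_{j_s'}^{b_s}),$$ where $\epsilon=1$ if the orientations on $\mathrm{Star}_\Delta(G)$ induced by the orientation of $\Delta$ and (via $\tau$) by that of $\Delta'$ agree, and $\epsilon=-1$ if they are opposite.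
   Context: A connected $k$-homology manifold of dimension $d-1$ ($d\ge2$, $k$ a field) is a connected simplicial complex such that the link of each nonempty face $G$ has the homology over $k$ of a sphere of dimension $d-|G|-1$. An orientation (if $\mathrm{char}\,k\neq 2$) is a choice, for each facet, of an ordering of its vertices up to even permutations, such that for every $(d-2)$-face the two orientations induced on it by the two facets containing it are opposite; a facet ordered $v_1,\dots,v_d$ induces on the face omitting $v_i$ the ordering $v_1,\dots,\widehat{v_i},\dots,v_d$ if $i-1$ is even, and the opposite orientation if $i-1$ is odd. If $\mathrm{char}\,k=2$, every such complex is regarded as oriented and all signs below are $1$. For a facet $F=\{j_1<\dots<j_d\}$, $\epsilon_F\in\{\pm1\}$ is the sign of the permutation taking $(j_1,\dots,j_d)$ to the chosen ordering. For $\Delta$ with vertex set $V$ and $K=k(a_{i,j}:1\le i\le d, j\in V)$ (independent indeterminates), $K[\Delta]$ is the Stanley–Reisner ring over $K$ in variables $x_j$, $\theta_i=\sum_ja_{i,j}x_j$, $H(\Delta)=K[\Delta]/(\theta_1,\dots,\theta_d)$; $H^d(\Delta)$ is one-dimensional and $\deg_\Delta:H^d(\Delta)\to K$ is the $K$-linear isomorphism with $\deg_\Delta(x_F)=\epsilon_F/[F]$ for every facet $F$, where $x_F=\prod_{j\in F}x_j$ and $[F]$ is the determinant of the $d\times d$ matrix with $(i,m)$ entry $a_{i,j_m}$ (columns in increasing order of $j_m$). The ordering of vertices in $V'$ used for $[\cdot]$ is compatible in the sense that orientations are compared via $\tau$. The closed star $\mathrm{Star}_\Delta(G)$ is the subcomplex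 consisting of all faces containing $G$ and all their subfaces. *)

(* Defs.v *)
From HB Require Import structures.
From mathcomp Require Import all_boot all_order all_algebra.
From mathcomp Require Import fraction.
From mathcomp.multinomials Require Import mpoly.
Set Implicit Arguments. Unset Strict Implicit. Unset Printing Implicit Defensive.
Import Order.TTheory GRing.Theory.
Local Open Scope ring_scope.

Definition is_complex n (D : {set {set 'I_n}}) : Prop :=
  (forall F E : {set 'I_n}, F \in D -> E \subset F -> E \in D) /\
  (forall v : 'I_n, [set v] \in D).

Definition link n (D : {set {set 'I_n}}) (G : {set 'I_n}) : {set {set 'I_n}} :=
  [set F in D | [disjoint F & G] && (F :|: G \in D)].

Definition star n (D : {set {set 'I_n}}) (G : {set 'I_n}) : {set {set 'I_n}} :=
  [set F in D | F :|: G \in D].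
Definition star_verts n (D : {set {set 'I_n}}) (G : {set 'I_n}) : {set 'I_n} :=
  [set v | [set v] :|: G \in D].

(* faces with j vertices (dimension j-1); j = 0 is the empty face *)
Definition faces_sz n (L : {set {set 'I_n}}) (j : nat) : {set {set 'I_n}} :=
  [set F in L | #|F| == j].

Definition pos n (F : {set 'I_n}) (v : 'I_n) : nat := #|[set u in F | (u < v)%N]|.

(* matrix of the simplicial boundary map C_j -> C_{j-1} (rows: faces with
   j+1 vertices, columns: faces with j vertices), coefficients in k *)
Definition bdmx (k : fieldType) n (L : {set {set 'I_n}}) (j : nat) :
  'M[k]_(#|faces_sz L j.+1|, #|faces_sz L j|) :=
  \matrix_(a < #|faces_sz L j.+1|, b < #|faces_sz L j|)
    (let F : {set 'I_n} := enum_val a in let E : {set 'I_n} := enum_val b in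
     if E \subset F then \sum_(v in F :\: E) (-1) ^+ pos F v else 0).

Definition bdrank (k : fieldType) n (L : {set {set 'I_n}}) (j : nat) : nat :=
  if j is j'.+1 then \rank (bdmx k L j') else 0%N.

(* dimension over k of the reduced homology H~_{j-1}(L; k) *)
Definition rhdim (k : fieldType) n (L : {set {set 'I_n}}) (j : nat) : nat :=
  (#|faces_sz L j| - bdrank k L j - bdrank k L j.+1)%N.

Definition sphere_homology (k : fieldType) n (L : {set {set 'I_n}}) (m : int) : Prop :=
  forall j : nat, rhdim k L j = (if (j%:Z == m + 1) then 1%N else 0%N).

Definition homology_manifold (k : fieldType) (d : nat) n (D : {set {set 'I_n}}) : Prop :=
  is_complex D /\
  forall G : {set 'I_n}, G \in D -> G != set0 ->
    sphere_homology k (link D G) (d%:Z - (#|G|)%:Z - 1).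

Definition connected_cx n (D : {set {set 'I_n}}) : Prop :=
  forall u v : 'I_n, connect (fun x y : 'I_n => [set x; y] \in D) u v.

Definition facet (d : nat) n (D : {set {set 'I_n}}) (F : {set 'I_n}) : bool :=
  (F \in D) && (#|F| == d).

(* eps F = true  iff the chosen orientation of the facet F is the odd class
   relative to the increasing order; the sign (-1)^(eps F) is taken in k, so
   that in characteristic 2 all signs are 1. *)
Definition oriented (k : fieldType) (d : nat) n (D : {set {set 'I_n}})
  (eps : {set 'I_n} -> bool) : Prop :=
  forall (F F' : {set 'I_n}) (v v' : 'I_n),
    facet d D F -> facet d D F' -> F != F' -> v \in F -> v' \in F' ->
    F :\ v = F' :\ v' ->
    (-1) ^+ (eps F + pos F v) = - ((-1) ^+ (eps F' + pos F' v')) :> k.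

Definition inversions n n' (tau : 'I_n -> 'I_n') (F : {set 'I_n}) : nat :=
  #|[set uv in setX F F | ((uv.1 < uv.2)%N && (tau uv.2 < tau uv.1)%N)]|.

(* The field K = k(a_{i,j} : i < d, j < n).  The indeterminate a_{i,j} is the
   variable of index enum_rank (i, j). *)
Definition NV (d n : nat) : nat := #|{: 'I_d * 'I_n}|.
Definition Kf (k : fieldType) (d n : nat) : fieldType := {fraction {mpoly k[NV d n]}}.
Definition avar d n (i : 'I_d) (j : 'I_n) : 'I_(NV d n) := enum_rank (i, j).
Definition aK (k : fieldType) d n (i : 'I_d) (j : 'I_n) : Kf k d n :=
  FracField.tofrac ('X_(avar i j) : {mpoly k[NV d n]}).

(* [F] : determinant of (a_{i, j_m}) with j_1 < ... < j_d the vertices of F *)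
Definition detF (k : fieldType) d n (F : {set 'I_n}) : Kf k d n :=
  \det (\matrix_(i < d, m < d) \sum_(v in F | pos F v == m) aK k i v).

Definition xF (k : fieldType) d n (F : {set 'I_n}) : {mpoly (Kf k d n)[n]} :=
  \prod_(v in F) 'X_v.
Definition theta (k : fieldType) d n (i : 'I_d) : {mpoly (Kf k d n)[n]} :=
  \sum_(j < n) (aK k i j)%:MP * 'X_j.

(* membership in the ideal I_Delta + (theta_1, ..., theta_d) *)
Definition in_J (k : fieldType) d n (D : {set {set 'I_n}}) (p : {mpoly (Kf k d n)[n]}) : Prop :=
  exists (r : {set 'I_n} -> {mpoly (Kf k d n)[n]}) (s : 'I_d -> {mpoly (Kf k d n)[n]}),
    p = \sum_(F : {set 'I_n} | F \notin D) r F * xF k d F + \sum_(i < d) s i * theta k n i.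

Definition homog_deg R n (e : nat) (p : {mpoly R[n]}) : bool :=
  all (fun m => mdeg m == e) (msupp p).

(* phi induces deg_Delta : H^d(Delta) -> K : it is K-linear, kills the degree-d
   part of the ideal, and sends x_F to eps_F/[F] for every facet F. *)
Definition is_deg_map (k : fieldType) d n (D : {set {set 'I_n}}) (eps : {set 'I_n} -> bool)
  (phi : {mpoly (Kf k d n)[n]} -> Kf k d n) : Prop :=
  [/\ forall p q, phi (p + q) = phi p + phi q,
      forall (c : Kf k d n) p, phi (c *: p) = c * phi p,
      forall p, homog_deg d p -> in_J D p -> phi p = 0
    & forall F, facet d D F -> phi (xF k d F) = (-1) ^+ eps F / detF k d F].

Definition mono R n s (j : 'I_s -> 'I_n) (b : 'I_s -> nat) : {mpoly R[n]} :=
  \prod_(m < s) 'X_(j m) ^+ b m.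
Arguments mono {R n s} j b.

Definition only_vars (k : fieldType) d n (S : {set 'I_n}) (p : {mpoly k[NV d n]}) : Prop :=
  forall m, m \in msupp p -> forall (i : 'I_d) (j : 'I_n), j \notin S -> m (avar i j) = 0%N.

(* a_{i,j} |-> a'_{i, tau j} *)
Definition transport (k : fieldType) d n n' (tau : 'I_n -> 'I_n')
  (p : {mpoly k[NV d n]}) : {mpoly k[NV d n']} :=
  mmap (fun c : k => c%:MP) (fun v => 'X_(avar (enum_val v).1 (tau (enum_val v).2))) p.

Definition star_iso n n' (D : {set {set 'I_n}}) (D' : {set {set 'I_n'}})
  (G : {set 'I_n}) (G' : {set 'I_n'}) (tau : 'I_n -> 'I_n') : Prop :=
  [/\ {in star_verts D G &, injective tau},
      tau @: star_verts D G = star_verts D' G'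
    & forall F : {set 'I_n}, F \subset star_verts D G ->
        (F \in star D G) = (tau @: F \in star D' G')].

(* Main.v *)
Require Import Defs.
From HB Require Import structures.
From mathcomp Require Import all_boot all_order all_algebra.
From mathcomp Require Import fraction.
From mathcomp.multinomials Require Import mpoly.
From mathcomp Require Import all_fingroup zify ring.
Set Implicit Arguments. Unset Strict Implicit. Unset Printing Implicit Defensive.
Import GRing.Theory.
Local Open Scope ring_scope.


Section Transport.
Variables (k : fieldType) (d n n' : nat) (tau : 'I_n -> 'I_n') (S : {set 'I_n}).
Local Notation P := {mpoly k[NV d n]}.
Local Notation tf := FracField.tofrac.

Lemma transportD (p q : P) : transport tau (p + q) = transport tau p + transport tau q.
Proof. by rewrite /transport mmapD. Qed.
Lemma transportN (p : P) : transport tau (- p) = - transport tau p.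
Proof. by rewrite /transport mmapN. Qed.
Lemma transportM (p q : P) : transport tau (p * q) = transport tau p * transport tau q.
Proof. rewrite /transport. exact: (rmorphM (mmap (@mpolyC _ k) _)). Qed.
Lemma transportC (c : k) : transport tau (c%:MP : P) = c%:MP.
Proof. by rewrite /transport mmapC. Qed.
Lemma transportXa i v : transport tau ('X_(avar i v) : P) = 'X_(avar i (tau v)).
Proof.
rewrite /transport mmapX mmap1U /avar enum_rankK /=. by [].
Qed.

Lemma only_varsD (p q : P) : only_vars S p -> only_vars S q -> only_vars S (p + q).
Proof.
move=> hp hq m /msuppD_le; rewrite mem_cat => /orP [/hp|/hq] //.
Qed.
Lemma only_varsN (p : P) : only_vars S p -> only_vars S (- p).
Proof. by move=> hp m; rewrite (perm_mem (msuppN p)); apply: hp. Qed.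
Lemma only_varsM (p q : P) : only_vars S p -> only_vars S q -> only_vars S (p * q).
Proof.
move=> hp hq m /msuppM_le /allpairsP [[m1 m2] /= [h1 h2 ->]] i j hj.
by rewrite mnmDE (hp _ h1 _ _ hj) (hq _ h2 _ _ hj).
Qed.
Lemma only_varsC (c : k) : only_vars S (c%:MP : P).
Proof.
move=> m; rewrite msuppC; case: (c == 0) => //.
by rewrite inE => /eqP -> i j _; rewrite mnm0E.
Qed.
Lemma only_varsXa i v : v \in S -> only_vars S ('X_(avar i v) : P).
Proof.
move=> hv m; rewrite msuppX inE => /eqP -> i' j hj.
rewrite mnm1E; case: eqP => // /enum_rank_inj [_ e]; by move: hj; rewrite -e hv.
Qed.

Definition Rep (x : Kf k d n) (y : Kf k d n') :=
  exists p q : P, [/\ only_vars S p, only_vars S q, q != 0, transport tau q != 0 &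
     x = tf p / tf q /\ y = tf (transport tau p) / tf (transport tau q)].

Lemma tf_neq0 (R : idomainType) (p : R) : p != 0 -> tf p != 0.
Proof. by rewrite tofrac_eq0. Qed.

Lemma Rep_add x y x2 y2 : Rep x y -> Rep x2 y2 -> Rep (x + x2) (y + y2).
Proof.
move=> [p [q [hp hq q0 tq0 [-> ->]]]] [p2 [q2 [hp2 hq2 q20 tq20 [-> ->]]]].
exists (p * q2 + p2 * q), (q * q2); split.
- by apply: only_varsD; apply: only_varsM.
- exact: only_varsM.
- by rewrite mulf_neq0.
- by rewrite transportM mulf_neq0.
split; first by rewrite addf_div ?tf_neq0 // !rmorphD !rmorphM.
by rewrite addf_div ?tf_neq0 // transportD !transportM !rmorphD !rmorphM.
Qed.

Lemma Rep_opp x y : Rep x y -> Rep (- x) (- y).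
Proof.
move=> [p [q [hp hq q0 tq0 [-> ->]]]]; exists (- p), q; split => //.
  exact: only_varsN.
by rewrite transportN !rmorphN !mulNr.
Qed.

Lemma Rep_mul x y x2 y2 : Rep x y -> Rep x2 y2 -> Rep (x * x2) (y * y2).
Proof.
move=> [p [q [hp hq q0 tq0 [-> ->]]]] [p2 [q2 [hp2 hq2 q20 tq20 [-> ->]]]].
exists (p * p2), (q * q2); split.
- exact: only_varsM.
- exact: only_varsM.
- by rewrite mulf_neq0.
- by rewrite transportM mulf_neq0.
split; first by rewrite mulf_div !rmorphM.
by rewrite mulf_div !transportM !rmorphM.
Qed.

Lemma Rep_inv x y : Rep x y -> y != 0 -> Rep x^-1 y^-1.
Proof.
move=> [p [q [hp hq q0 tq0 [-> ->]]]] y0.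
have tp0 : transport tau p != 0.
  by apply: contraNneq y0 => ->; rewrite rmorph0 mul0r.
have p0 : p != 0 by apply: contraNneq tp0 => ->; rewrite -(rmorph0 (@mpolyC _ k)) transportC.
exists q, p; split => //; by rewrite !invf_div.
Qed.

Lemma Rep_c (c : k) : Rep (tf (c%:MP)) (tf (c%:MP)).
Proof.
exists c%:MP, 1; split.
- exact: only_varsC.
- by rewrite -mpolyC1; exact: only_varsC.
- exact: oner_neq0.
- by rewrite -mpolyC1 transportC mpolyC1 oner_neq0.
by rewrite -mpolyC1 !transportC !rmorph1 !divr1.
Qed.

Lemma Rep_1 : Rep 1 1.
Proof. by have := Rep_c 1; rewrite mpolyC1 !rmorph1. Qed.
Lemma Rep_0 : Rep 0 0.
Proof. by have := Rep_c 0; rewrite mpolyC0 !rmorph0. Qed.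
Lemma Rep_sign b : Rep ((-1) ^+ b) ((-1) ^+ b).
Proof.
elim: b => [|b IH]; first by rewrite !expr0; exact: Rep_1.
by rewrite !exprS; apply: Rep_mul => //; apply: Rep_opp; exact: Rep_1.
Qed.

Lemma Rep_a i v : v \in S -> Rep (aK k i v) (aK k i (tau v)).
Proof.
move=> hv; exists 'X_(avar i v), 1; split.
- exact: only_varsXa.
- by rewrite -mpolyC1; exact: only_varsC.
- exact: oner_neq0.
- by rewrite -mpolyC1 transportC mpolyC1 oner_neq0.
by rewrite -mpolyC1 transportC transportXa mpolyC1 !rmorph1 !divr1.
Qed.

Lemma Rep_eq0 x y : Rep x y -> x = 0 -> y = 0.
Proof.
move=> [p [q [hp hq q0 tq0 [-> ->]]]] /eqP.
rewrite mulf_eq0 invr_eq0 !tofrac_eq0 (negbTE q0) orbF => /eqP ->.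
by rewrite -(rmorph0 (@mpolyC _ k)) transportC !rmorph0 mul0r.
Qed.

Lemma Rep_fun x y y' : Rep x y -> Rep x y' -> y = y'.
Proof.
move=> h1 h2; apply/eqP; rewrite -subr_eq0; apply/eqP.
by apply: (Rep_eq0 (Rep_add h1 (Rep_opp h2))); rewrite subrr.
Qed.

Lemma Rep_sum (I : finType) (Pr : pred I) (F : I -> Kf k d n) F' :
  (forall i, Pr i -> Rep (F i) (F' i)) -> Rep (\sum_(i | Pr i) F i) (\sum_(i | Pr i) F' i).
Proof.
move=> h; elim/big_rec2: _; first exact: Rep_0.
by move=> i y1 y2 Pi r; apply: Rep_add => //; apply: h.
Qed.

Lemma Rep_prod (I : finType) (Pr : pred I) (F : I -> Kf k d n) F' :
  (forall i, Pr i -> Rep (F i) (F' i)) -> Rep (\prod_(i | Pr i) F i) (\prod_(i | Pr i) F' i).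
Proof.
move=> h; elim/big_rec2: _; first exact: Rep_1.
by move=> i y1 y2 Pi r; apply: Rep_mul => //; apply: h.
Qed.

Lemma Rep_det m (A : 'M[Kf k d n]_m) (A' : 'M[Kf k d n']_m) :
  (forall i j, Rep (A i j) (A' i j)) -> Rep (\det A) (\det A').
Proof.
move=> h; rewrite /determinant; apply: Rep_sum => s _.
apply: Rep_mul; first exact: Rep_sign.
by apply: Rep_prod => i _; apply: h.
Qed.

Lemma Rep_invmx m (A : 'M[Kf k d n]_m) (A' : 'M[Kf k d n']_m) :
  (forall i j, Rep (A i j) (A' i j)) -> \det A' != 0 ->
  forall i j, Rep (invmx A i j) (invmx A' i j).
Proof.
move=> h dA' i j.
have hd := Rep_det h.
have dA : \det A != 0 by apply: contraNneq dA' => /(Rep_eq0 hd) ->; rewrite eqxx.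
rewrite /invmx !unitmxE !unitfE dA dA' /=.
rewrite !mxE; apply: Rep_mul; first exact: Rep_inv.
rewrite /cofactor; apply: Rep_mul; first exact: Rep_sign.
apply: Rep_det => a b; rewrite !mxE; exact: h.
Qed.

End Transport.

Lemma extend_face (k : fieldType) d n (D : {set {set 'I_n}}) H :
  homology_manifold k d D -> H \in D -> H != set0 -> (#|H| < d)%N ->
  exists v, (v \notin H) && (v |: H \in D).
Proof.
move=> [[hsub _] hm] HD H0 Hd.
case: (boolP [exists v, (v \notin H) && (v |: H \in D)]) => [/existsP//|/existsPn none].
exfalso.
have := hm H HD H0 0%N.
rewrite /rhdim /= subrK.
have -> : (0%:Z == d%:Z - #|H|%:Z) = false.
  by apply/negbTE; rewrite eq_sym subr_eq0 eqz_nat neq_ltn Hd orbT.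
have e1 : #|faces_sz (link D H) 1| = 0%N.
  apply/eqP; rewrite cards_eq0; apply/eqP/setP => F; rewrite !inE.
  apply/negbTE; apply/negP => /andP [/andP [FD /andP [dis FH]] /cards1P [v Fv]].
  have := none v; subst F; rewrite -[v |: H]/([set v] :|: H) FH andbT.
  by move: dis; rewrite disjoints1 => ->.
have r0 : \rank (bdmx k (link D H) 0) = 0%N.
  apply/eqP; rewrite -leqn0; apply: leq_trans (rank_leq_row _) _; by rewrite e1.
rewrite r0 !subn0.
have : set0 \in faces_sz (link D H) 0.
  have dis0 : [disjoint set0 & H] by rewrite -setI_eq0 set0I.
  rewrite !inE cards0 eqxx andbT dis0 set0U HD andbT.
  by rewrite andbT; apply: hsub HD _; exact: sub0set.
by move=> h0 /eqP; rewrite cards_eq0 => /eqP e; move: h0; rewrite e inE.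
Qed.

Lemma facet_above (k : fieldType) d n (D : {set {set 'I_n}}) H :
  homology_manifold k d D -> H \in D -> H != set0 -> (#|H| <= d)%N ->
  exists F, [/\ F \in D, #|F| = d & H \subset F].
Proof.
move=> hm; move: {2}(d - #|H|)%N (erefl (d - #|H|)%N) => m.
elim: m H => [|m IH] H e HD H0 Hd.
  exists H; split => //; apply/eqP; rewrite eqn_leq Hd /=.
  by rewrite -subn_eq0 e.
have Hlt : (#|H| < d)%N by rewrite -subn_gt0 e.
have [v /andP [vH vHD]] := extend_face hm HD H0 Hlt.
have cv : #|v |: H| = #|H|.+1 by rewrite cardsU1 vH.
have e' : (d - #|v |: H|)%N = m by rewrite cv subnS e.
have n0 : v |: H != set0 by apply/set0Pn; exists v; rewrite setU11.
have d' : (#|v |: H| <= d)%N by rewrite cv.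
have [F [FD Fd HF]] := IH (v |: H) e' vHD n0 d'.
by exists F; split => //; apply: subset_trans HF; apply: subsetUr.
Qed.

Section Pos.
Variable n : nat.
Implicit Types (F : {set 'I_n}) (u v : 'I_n).

Lemma pos_lt F v : v \in F -> (pos F v < #|F|)%N.
Proof.
move=> vF; apply: proper_card; apply/properP; split.
  by apply/subsetP => u; rewrite inE => /andP [].
by exists v => //; rewrite inE ltnn andbF.
Qed.

Lemma pos_mono F u v : u \in F -> (u < v)%N -> (pos F u < pos F v)%N.
Proof.
move=> uF uv; apply: proper_card; apply/properP; split.
  apply/subsetP => w; rewrite !inE => /andP [-> wu] /=; exact: ltn_trans wu uv.
by exists u; rewrite !inE ?uF ?uv ?ltnn ?andbF.
Qed.

Lemma pos_ltE F u v : u \in F -> v \in F -> (pos F u < pos F v)%N = (u < v)%N.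
Proof.
move=> uF vF; case: (ltngtP u v) => [uv|vu|/val_inj ->]; last by rewrite ltnn.
- exact: pos_mono.
- by apply/negbTE; rewrite -leqNgt ltnW // pos_mono.
Qed.

Lemma pos_inj F u v : u \in F -> v \in F -> pos F u = pos F v -> u = v.
Proof.
move=> uF vF e; case: (ltngtP u v) => [uv|vu|/val_inj //].
- by move: (pos_mono uF uv); rewrite e ltnn.
- by move: (pos_mono vF vu); rewrite e ltnn.
Qed.

Lemma pos_surj F m : (m < #|F|)%N -> exists2 v, v \in F & pos F v = m.
Proof.
case eF : #|F| => [//|c] mc.
pose g v : 'I_c.+1 := inord (pos F v).
have ginj : {in F &, injective g}.
  move=> u v uF vF e; have := congr1 (@nat_of_ord _) e; rewrite /g.
  have hu : (pos F u < c.+1)%N by rewrite -eF pos_lt.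
  have hv : (pos F v < c.+1)%N by rewrite -eF pos_lt.
  rewrite (inordK hu) (inordK hv); exact: pos_inj.
have : g @: F = setT.
  apply/eqP; rewrite eqEcard subsetT /= cardsT card_ord (card_in_imset ginj) eF leqnn.
  by [].
move/setP => /(_ (inord m)); rewrite inE => /imsetP [v vF e].
have := congr1 (@nat_of_ord _) e; rewrite /g.
have hv : (pos F v < c.+1)%N by rewrite -eF pos_lt.
rewrite (inordK hv) (inordK mc) => e'; by exists v.
Qed.

Definition fe F (v0 : 'I_n) (m : nat) : 'I_n := odflt v0 [pick v in F | pos F v == m].

Lemma fe_spec F v0 m : (m < #|F|)%N -> fe F v0 m \in F /\ pos F (fe F v0 m) = m.
Proof.
move=> /pos_surj [v vF e]; rewrite /fe; case: pickP => [u /andP [uF /eqP ->]|/(_ v)] //=.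
by rewrite vF e eqxx.
Qed.

Lemma fe_pos F v0 v : v \in F -> fe F v0 (pos F v) = v.
Proof.
move=> vF; have [h1 h2] := fe_spec v0 (pos_lt vF); exact: pos_inj h2.
Qed.

Lemma sum_pos (R : nmodType) F v0 (g : 'I_n -> R) m : (m < #|F|)%N ->
  \sum_(v in F | pos F v == m) g v = g (fe F v0 m).
Proof.
move=> mF; have [h1 h2] := fe_spec v0 mF.
rewrite (big_pred1 (fe F v0 m)) // => v /=; apply/andP/eqP.
  by move=> [vF /eqP e]; apply: (pos_inj vF h1); rewrite h2.
by move=> ->; rewrite h1 h2.
Qed.
End Pos.

Definition invp N (s : 'S_N) : nat :=
  \sum_(i : 'I_N) \sum_(j : 'I_N) ((i < j)%N && (s j < s i)%N : nat).

Lemma lift_ltE N (h : 'I_N.+1) (x : 'I_N) : (lift h x < h)%N = (x < h)%N.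
Proof. rewrite /= /bump; case: leqP => hx /=; lia. Qed.

Lemma lift_lt2 N (h : 'I_N.+1) (x y : 'I_N) : (lift h x < lift h y)%N = (x < y)%N.
Proof. by rewrite /= !ltnNge leq_bump2. Qed.

Lemma sum_lt N j : (j <= N)%N -> \sum_(i < N) ((i < j)%N : nat) = j.
Proof.
move=> jN; suff h : forall M, \sum_(i < M) ((i < j)%N : nat) = minn j M.
  by rewrite h; apply/minn_idPl.
elim=> [|M IH]; first by rewrite big_ord0 minn0.
rewrite big_ord_recr /= IH /minn; case: (ltnP j M) => h1; case: (ltnP M j) => h2 //=;
  case: (ltnP j M.+1) => h3 //; try lia.
Qed.

Lemma odd_invp N (s : 'S_N) : odd_perm s = odd (invp s).
Proof.
elim: N s => [|N IH] s.
  have -> : s = 1%g by apply/permP => -[].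
  by rewrite odd_perm1 /invp big_ord0.
pose j := s ord0.
have nj : forall x, s (lift ord0 x) != j.
  by move=> x; rewrite (inj_eq perm_inj) eq_sym neq_lift.
pose f (x : 'I_N) : 'I_N := odflt x (unlift j (s (lift ord0 x))).
have fE : forall x, lift j (f x) = s (lift ord0 x).
  by move=> x; rewrite /f; case: unliftP => [y -> //|e]; move: (nj x); rewrite e eqxx.
have finj : injective f.
  by move=> x y e; apply: (@lift_inj _ ord0); apply: (@perm_inj _ s); rewrite -!fE e.
pose s' := perm finj.
have sE : s = lift_perm ord0 j s'.
  apply/permP => i; case: (unliftP ord0 i) => [x ->|->].
    by rewrite lift_perm_lift permE fE.
  by rewrite lift_perm_id.
have invE : invp s = (invp s' + j)%N.
  rewrite /invp big_ord_recl big_ord_recl /= add0n addnC; congr (_ + _).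
    apply: eq_bigr => x _; rewrite big_ord_recl /=.
    by apply: eq_bigr => y _; rewrite -!fE lift_lt2 !permE /bump /= !add1n ltnS.
  rewrite (eq_bigr (fun x => (s' x < j)%N : nat)); last by move=> x _; rewrite permE -fE lift_ltE.
  rewrite (reindex_inj (@perm_inj _ s'^-1)) /=.
  under eq_bigr => x _ do rewrite permKV.
  by rewrite sum_lt // -ltnS.
by rewrite {1}sE odd_lift_perm /= IH invE oddD addbC.
Qed.

Section Dets.
Variables (k : fieldType) (d n : nat).

Lemma generic_det (f : 'I_d -> 'I_n) : injective f ->
  \det (\matrix_(i, m) aK k i (f m) : 'M[Kf k d n]_d) != 0.
Proof.
move=> finj.
pose M0 : 'M[{mpoly k[NV d n]}]_d := \matrix_(i, m) 'X_(avar i (f m)).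
have -> : (\matrix_(i, m) aK k i (f m) : 'M[Kf k d n]_d) = map_mx (@FracField.tofrac _) M0.
  by apply/matrixP => i m; rewrite !mxE.
rewrite det_map_mx tofrac_eq0.
pose ev (v : 'I_(NV d n)) : k := ((enum_val v).2 == f (enum_val v).1)%:R.
apply/eqP => h0.
have : meval ev (\det M0) = 1.
  rewrite -det_map_mx -(det1 _ d); congr (\det _); apply/matrixP => i m.
  rewrite !mxE; change (meval ev 'X_(avar i (f m)) = (i == m)%:R).
  rewrite mevalXU /ev /avar enum_rankK /= (inj_eq finj) eq_sym.
  by case: (i == m).
by rewrite h0 meval0 => /eqP; rewrite eq_sym oner_eq0.
Qed.

Lemma detF_fe (F : {set 'I_n}) v0 : #|F| = d ->
  detF k d F = \det (\matrix_(i, m) aK k i (fe F v0 m) : 'M[Kf k d n]_d).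
Proof.
move=> cF; rewrite /detF; congr (\det _); apply/matrixP => i m; rewrite !mxE.
by apply: sum_pos; rewrite cF.
Qed.

Lemma fe_in (F : {set 'I_n}) v0 (m : 'I_d) : #|F| = d -> fe F v0 m \in F.
Proof. by move=> cF; case: (fe_spec v0 (_ : (m < #|F|)%N)); rewrite ?cF. Qed.

Lemma fe_posE (F : {set 'I_n}) v0 (m : 'I_d) : #|F| = d -> pos F (fe F v0 m) = m.
Proof. by move=> cF; case: (fe_spec v0 (_ : (m < #|F|)%N)); rewrite ?cF. Qed.

End Dets.

Section Dets2.
Variables (k : fieldType) (d n n' : nat) (tau : 'I_n -> 'I_n').

Lemma inversions_invp (F : {set 'I_n}) v0 (pi : 'S_d) :
  #|F| = d -> {in F &, injective tau} ->
  (forall m : 'I_d, pos (tau @: F) (tau (fe F v0 m)) = pi m) ->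
  inversions tau F = invp pi.
Proof.
move=> cF tinj hpi.
set F' := tau @: F.
pose g (u v : 'I_n) := ((u < v)%N && (tau v < tau u)%N : nat).
have e1 : invp pi = \sum_(i : 'I_d) \sum_(j : 'I_d) g (fe F v0 i) (fe F v0 j).
  apply: eq_bigr => i _; apply: eq_bigr => j _; rewrite /g -!hpi.
  have hi := fe_in v0 i cF; have hj := fe_in v0 j cF.
  rewrite (pos_ltE (imset_f tau hj) (imset_f tau hi)).
  by rewrite -(pos_ltE hi hj) !fe_posE.
have feinj : injective (fun i : 'I_d => fe F v0 i).
  move=> i j /(congr1 (pos F)); rewrite !fe_posE // => e; exact: val_inj.
have imF : [set fe F v0 i | i : 'I_d] = F.
  apply/eqP; rewrite eqEcard card_imset // card_ord cF leqnn andbT.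
  by apply/subsetP => x /imsetP [i _ ->]; apply: fe_in.
have e2 : \sum_(u in F) \sum_(v in F) g u v = \sum_(i : 'I_d) \sum_(j : 'I_d) g (fe F v0 i) (fe F v0 j).
  have reidx (h : 'I_n -> nat) : \sum_(u in F) h u = \sum_(i : 'I_d) h (fe F v0 i).
    rewrite -[in LHS]imF big_imset //=; by move=> a b _ _; apply: feinj.
  rewrite reidx; apply: eq_bigr => i _; exact: reidx.
rewrite e1 -e2 /inversions -sum1_card pair_big /=.
rewrite big_mkcond [RHS]big_mkcond /=.
apply: eq_bigr; case=> u v _.
rewrite in_set in_setX /g /=.
case E1: (u \in F); case E2: (v \in F); case E3: (u < v)%N; case E4: (tau v < tau u)%N; by [].
Qed.

Lemma det_transport (F : {set 'I_n}) v0 : #|F| = d -> {in F &, injective tau} ->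
  \det (\matrix_(i, m) aK k i (tau (fe F v0 m)) : 'M[Kf k d n']_d)
    = (-1) ^+ inversions tau F * detF k d (tau @: F).
Proof.
move=> cF tinj; set F' := tau @: F.
have cF' : #|F'| = d by rewrite card_in_imset.
rewrite (detF_fe k (tau v0) cF').
have hin (m : 'I_d) : tau (fe F v0 m) \in F' by apply: imset_f; exact: (fe_in v0 m cF).
have hlt (m : 'I_d) : (pos F' (tau (fe F v0 m)) < d)%N.
  by have := pos_lt (hin m); rewrite cF'.
pose pf (m : 'I_d) : 'I_d := Ordinal (hlt m).
have pinj : injective pf.
  move=> i j /(congr1 val) /= /pos_inj e.
  have /tinj e2 := e (hin i) (hin j).
  have := congr1 (pos F) (e2 (fe_in v0 i cF) (fe_in v0 j cF)).
  by rewrite !fe_posE // => e3; apply: val_inj.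
pose pi := perm pinj.
have hpi (m : 'I_d) : pos F' (tau (fe F v0 m)) = pi m by rewrite permE.
have -> : (\matrix_(i, m) aK k i (tau (fe F v0 m)) : 'M[Kf k d n']_d)
    = col_perm pi (\matrix_(i, m) aK k i (fe F' (tau v0) m)).
  apply/matrixP => i m; rewrite !mxE -hpi fe_pos //.
rewrite col_permE det_mulmx det_perm odd_permV mulrC; congr (_ * _).
by rewrite (inversions_invp cF tinj hpi) odd_invp signr_odd.
Qed.
End Dets2.

Section Ideal.
Variables (k : fieldType) (d n : nat) (D : {set {set 'I_n}}).
Local Notation K := (Kf k d n).
Local Notation P := {mpoly K[n]}.
Local Notation inJ := (@in_J k d n D).

Lemma in_J0 : inJ (0 : P).
Proof.
exists (fun _ => 0), (fun _ => 0).
by rewrite !big1 ?addr0 // => *; rewrite mul0r.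
Qed.

Lemma in_JD (p q : P) : inJ p -> inJ q -> inJ (p + q).
Proof.
move=> [r1 [s1 ->]] [r2 [s2 ->]]; exists (fun F => r1 F + r2 F), (fun i => s1 i + s2 i).
rewrite addrACA -!big_split /=; congr (_ + _); apply: eq_bigr => *; by rewrite mulrDl.
Qed.

Lemma in_JM (q p : P) : inJ p -> inJ (q * p).
Proof.
move=> [r [s ->]]; exists (fun F => q * r F), (fun i => q * s i).
rewrite mulrDr !mulr_sumr; congr (_ + _); apply: eq_bigr => *; by rewrite mulrA.
Qed.

Lemma in_J_xF F : F \notin D -> inJ (xF k d F).
Proof.
move=> FD; exists (fun E => if E == F then 1 else 0), (fun _ => 0).
rewrite [X in _ + X]big1 ?addr0; last by move=> *; rewrite mul0r.
rewrite (bigD1 F) //= eqxx mul1r big1 ?addr0 // => E /andP [_ /negbTE ->].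
by rewrite mul0r.
Qed.

Lemma in_J_theta i : inJ (theta k n i).
Proof.
exists (fun _ => 0), (fun j => if j == i then 1 else 0).
rewrite big1 ?add0r; last by move=> *; rewrite mul0r.
rewrite (bigD1 i) //= eqxx mul1r big1 ?addr0 // => j /negbTE ->.
by rewrite mul0r.
Qed.

Lemma in_J_sum (I : finType) (Pr : pred I) (f : I -> P) :
  (forall i, Pr i -> inJ (f i)) -> inJ (\sum_(i | Pr i) f i).
Proof.
move=> h; elim/big_rec: _; first exact: in_J0.
by move=> i x Pi hx; apply: in_JD => //; apply: h.
Qed.

Lemma homogD e (p q : P) : homog_deg e p -> homog_deg e q -> homog_deg e (p + q).
Proof.
move=> /allP hp /allP hq; apply/allP => m /msuppD_le; rewrite mem_cat.
by case/orP => [/hp|/hq].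
Qed.

Lemma homogN e (p : P) : homog_deg e p -> homog_deg e (- p).
Proof. by move=> /allP hp; apply/allP => m; rewrite (perm_mem (msuppN p)) => /hp. Qed.

Lemma homogZ e c (p : P) : homog_deg e p -> homog_deg e (c *: p).
Proof. by move=> /allP hp; apply/allP => m /msuppZ_le /hp. Qed.

Lemma homogM e1 e2 (p q : P) : homog_deg e1 p -> homog_deg e2 q -> homog_deg (e1 + e2) (p * q).
Proof.
move=> /allP hp /allP hq; apply/allP => m /msuppM_le /allpairsP [[m1 m2] /= [h1 h2 ->]].
by rewrite mdegD (eqP (hp _ h1)) (eqP (hq _ h2)).
Qed.

Lemma homog1 : homog_deg 0 (1 : P).
Proof. by apply/allP => m; rewrite msupp1 inE => /eqP ->; rewrite mdeg0. Qed.

Lemma homog0 e : homog_deg e (0 : P).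
Proof. by apply/allP => m; rewrite msupp0. Qed.

Lemma homogX v : homog_deg 1 ('X_v : P).
Proof. by apply/allP => m; rewrite msuppX inE => /eqP ->; rewrite mdeg1. Qed.

Lemma homogXn v e : homog_deg e ('X_v ^+ e : P).
Proof.
elim: e => [|e IH]; first by rewrite expr0 homog1.
by rewrite exprS -add1n; apply: homogM => //; exact: homogX.
Qed.

Lemma homog_sum (I : finType) (Pr : pred I) (f : I -> P) e :
  (forall i, Pr i -> homog_deg e (f i)) -> homog_deg e (\sum_(i | Pr i) f i).
Proof.
move=> h; elim/big_rec: _; first exact: homog0.
by move=> i x Pi hx; apply: homogD => //; apply: h.
Qed.

Lemma homog_prodX (I : finType) (iota : I -> 'I_n) (b : I -> nat) :
  homog_deg (\sum_i b i) (\prod_i 'X_(iota i) ^+ b i : P).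
Proof.
elim/big_rec2: _; first exact: homog1.
by move=> i e x _ hx; apply: homogM => //; exact: homogXn.
Qed.
End Ideal.

Section Reduce.
Variables (k : fieldType) (d n : nat) (D : {set {set 'I_n}}) (eps : {set 'I_n} -> bool).
Variable (phi : {mpoly (Kf k d n)[n]} -> Kf k d n).
Hypothesis hphi : is_deg_map D eps phi.
Variables (N : nat) (iota : 'I_N -> 'I_n).
Local Notation K := (Kf k d n).
Local Notation P := {mpoly K[n]}.
Local Notation inJ := (@in_J k d n D).

Definition monoZ (b : 'I_N -> nat) : P := \prod_(v : 'I_N) 'X_(iota v) ^+ b v.

Lemma monoZD b1 b2 : monoZ (fun v => b1 v + b2 v) = monoZ b1 * monoZ b2.
Proof. by rewrite /monoZ -big_split /=; apply: eq_bigr => v _; rewrite exprD. Qed.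

Lemma monoZ_ext b1 b2 : b1 =1 b2 -> monoZ b1 = monoZ b2.
Proof. by move=> e; apply: eq_bigr => v _; rewrite e. Qed.

Lemma monoZ1 u : monoZ (fun v => (v == u) : nat) = 'X_(iota u).
Proof.
rewrite /monoZ (bigD1 u) //= eqxx expr1 big1 ?mulr1 // => v /negbTE ->.
by rewrite expr0.
Qed.

Lemma monoZ_set (H : {set 'I_N}) : {in H &, injective iota} ->
  monoZ (fun v => (v \in H) : nat) = xF k d (iota @: H).
Proof.
move=> inj; rewrite /xF big_imset //= /monoZ [RHS]big_mkcond /=.
by apply: eq_bigr => v _; case: (v \in H); rewrite ?expr1 ?expr0.
Qed.

Lemma phi0 : phi 0 = 0.
Proof.
case: hphi => hadd _ _ _; by apply: (addrI (phi 0)); rewrite -hadd !addr0.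
Qed.

Lemma phi_sum (I : finType) (Pr : pred I) (f : I -> P) :
  phi (\sum_(i | Pr i) f i) = \sum_(i | Pr i) phi (f i).
Proof.
case: hphi => hadd _ _ _; exact: (big_morph phi hadd phi0).
Qed.

Lemma phiN p : phi (- p) = - phi p.
Proof.
case: hphi => hadd _ _ _; apply/eqP; rewrite -subr_eq0 opprK -hadd addNr phi0 //.
Qed.

Lemma theta_sum (c : 'I_d -> K) :
  \sum_i (c i)%:MP * theta k n i = \sum_(v : 'I_n) (\sum_i c i * aK k i v)%:MP * 'X_v.
Proof.
rewrite /theta; under eq_bigr => i _ do rewrite mulr_sumr.
rewrite exchange_big /=; apply: eq_bigr => v _.
rewrite rmorph_sum mulr_suml; apply: eq_bigr => i _.
by rewrite mulrA -rmorphM.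
Qed.


Lemma reduce_step (b : 'I_N -> nat) (w : 'I_N) (Fs : {set 'I_n}) (c : 'I_d -> K) :
  let H := [set v | (0 < b v)%N] in
  {in H &, injective iota} -> iota @: H \subset Fs -> (1 < b w)%N -> (\sum_v b v)%N = d ->
  (forall v', v' \in Fs -> \sum_i c i * aK k i v' = ((v' == iota w) : nat)%:R) ->
  phi (monoZ b) = - \sum_(v' | (v' \notin Fs) && (v' |: iota @: H \in D))
        (\sum_i c i * aK k i v') * phi ('X_v' * monoZ (fun v => b v - (v == w))%N).
Proof.
move=> H inj HFs bw sb hc.
have [hadd hscale hkill _] := hphi.
set b0 := (fun v => b v - (v == w))%N.
set m0 := monoZ b0.
set ga := fun v' => \sum_i c i * aK k i v'.
have wH : w \in H by rewrite inE; apply: leq_trans bw.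
have ewFs : iota w \in Fs by apply: (subsetP HFs); apply: imset_f.
have eb : b =1 (fun v => (v == w) + b0 v)%N.
  move=> v; rewrite /b0; case: eqP => [->|_] /=; last by rewrite subn0.
  rewrite subnKC //; exact: ltnW.
have mb : monoZ b = 'X_(iota w) * m0.
  by rewrite -monoZ1 /m0 -monoZD; apply: monoZ_ext.
have sb0 : (1 + \sum_v b0 v)%N = d.
  rewrite -sb (eq_bigr _ (fun v _ => eb v)) big_split /=; congr (_ + _)%N.
  rewrite (bigD1 w) //= eqxx big1 // => v /negbTE -> //.
have eX : 'X_(iota w) = \sum_i (c i)%:MP * theta k n i - \sum_(v' | v' \notin Fs) (ga v')%:MP * 'X_v'.
  rewrite theta_sum (bigID (fun v' => v' \in Fs)) /= addrK.
  rewrite (bigD1 (iota w)) //= [X in _ + X]big1 ?addr0.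
    by rewrite hc // eqxx /= mulr1n rmorph1 mul1r.
  move=> v' /andP [hv' ne]; rewrite hc // (negbTE ne) /= mulr0n rmorph0 mul0r //.
pose S1 := \sum_(v' | (v' \notin Fs) && (v' |: iota @: H \in D)) (ga v') *: ('X_v' * m0).
pose S2 := \sum_(v' | (v' \notin Fs) && ~~ (v' |: iota @: H \in D)) (ga v')%:MP * 'X_v' * m0.
have eR : monoZ b + S1 = (\sum_i (c i)%:MP * theta k n i) * m0 - S2.
  have hS1 : S1 = \sum_(v' | (v' \notin Fs) && (v' |: iota @: H \in D)) (ga v')%:MP * 'X_v' * m0.
    by apply: eq_bigr => v' _; rewrite -mulrA mul_mpolyC.
  rewrite mb eX mulrBl mulr_suml (bigID (fun v' => v' |: iota @: H \in D)) /=.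
  rewrite mulrDl !mulr_suml hS1 /S2; ring.
have hR : inJ (monoZ b + S1).
  rewrite eR; apply: in_JD.
    rewrite mulr_suml; apply: in_J_sum => i _; rewrite mulrAC; apply: in_JM.
    exact: in_J_theta.
  rewrite -mulN1r; apply: in_JM; apply: in_J_sum => v' /andP [nF nD].
  rewrite -mulrA; apply: in_JM.
  pose b1 := (fun v => b0 v - (v \in H))%N.
  have eb1 : b0 =1 (fun v => b1 v + (v \in H))%N.
    move=> v; rewrite /b1 subnK //; case vH: (v \in H) => //=.
    move: vH; rewrite /b0 inE; case: eqP => [->|_] /=; last by rewrite subn0.
    by move=> _; rewrite subn_gt0.
  have nH : v' \notin iota @: H by apply: contra nF; apply: (subsetP HFs).
  rewrite /m0 (monoZ_ext eb1) monoZD (monoZ_set inj) mulrCA.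
  apply: in_JM.
  by have := in_J_xF k d nD; rewrite /xF big_setU1.
have hhom : homog_deg d (monoZ b + S1).
  apply: homogD; first by move: (homog_prodX k d iota b); rewrite sb.
  apply: homog_sum => v' _; apply: homogZ.
  by have h := homogM (homogX k d v') (homog_prodX k d iota b0); rewrite sb0 in h.
have := hkill _ hhom hR.
rewrite hadd.
have -> : phi S1 = \sum_(v' | (v' \notin Fs) && (v' |: iota @: H \in D)) ga v' * phi ('X_v' * m0).
  apply: etrans (phi_sum _ _) _; apply: eq_bigr => v' _; exact: hscale.
by move/eqP; rewrite addr_eq0 => /eqP.


Qed.

End Reduce.


Lemma coef_lemma (k : fieldType) d N (f : 'I_d -> 'I_N) :
  \det (\matrix_(i, m) aK k i (f m) : 'M[Kf k d N]_d) != 0 ->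
  forall mw mv : 'I_d,
   \sum_i invmx (\matrix_(i, m) aK k i (f m) : 'M[Kf k d N]_d) mw i * aK k i (f mv)
     = ((mw == mv) : nat)%:R.
Proof.
move=> dA mw mv.
have u : (\matrix_(i, m) aK k i (f m) : 'M[Kf k d N]_d) \in unitmx by rewrite unitmxE unitfE.
have := mulVmx u; move/matrixP/(_ mw mv); rewrite !mxE => <-.
by apply: eq_bigr => i _; rewrite mxE.
Qed.

Lemma sum_ind n (H : {set 'I_n}) : (\sum_(v : 'I_n) ((v \in H) : nat))%N = #|H|.
Proof. by rewrite -sum1_card [RHS]big_mkcond /=; apply: eq_bigr => v _; case: (v \in H). Qed.

Section Main.
Variables (k : fieldType) (d n n' : nat) (D : {set {set 'I_n}}) (D' : {set {set 'I_n'}}).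
Variables (eps : {set 'I_n} -> bool) (eps' : {set 'I_n'} -> bool) (tau : 'I_n -> 'I_n').
Variables (e : bool) (G : {set 'I_n}) (v0 : 'I_n).
Variables (phi : {mpoly (Kf k d n)[n]} -> Kf k d n) (phi' : {mpoly (Kf k d n')[n']} -> Kf k d n').
Hypotheses (hm : homology_manifold k d D) (hm' : homology_manifold k d D').
Hypothesis GD : G \in D.
Hypothesis hiso : star_iso D D' G (tau @: G) tau.
Hypothesis hor : forall F, facet d D F -> G \subset F ->
     (-1) ^+ eps F = (-1) ^+ e * (-1) ^+ (eps' (tau @: F) + inversions tau F) :> k.
Hypotheses (hphi : is_deg_map D eps phi) (hphi' : is_deg_map D' eps' phi').

Local Notation S := (star_verts D G).
Local Notation Rp := (@Rep k d n n' tau S).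

Lemma tinj : {in S &, injective tau}.
Proof. by case: hiso. Qed.

Lemma sub_S H : H \in D -> G \subset H -> H \subset S.
Proof.
move=> HD GH; apply/subsetP => v vH; rewrite inE.
case: hm => [[hsub _] _]; apply: hsub HD _.
by rewrite subUset sub1set vH GH.
Qed.

Lemma in_star H : H \in D -> G \subset H -> H \in star D G.
Proof. by move=> HD GH; rewrite inE HD (setUidPl GH) HD. Qed.

Lemma tau_face H : H \in D -> G \subset H -> tau @: H \in D'.
Proof.
move=> HD GH; case: hiso => _ _ h.
by move: (in_star HD GH); rewrite (h _ (sub_S HD GH)) inE => /andP [].
Qed.

Lemma tau_link H v : H \in D -> G \subset H -> v |: H \in D -> tau v |: tau @: H \in D'.
Proof.
move=> HD GH vHD; rewrite -imsetU1; apply: tau_face => //.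
by apply: (subset_trans GH); exact: subsetUr.
Qed.

Lemma tau_link_inv H v' : H \in D -> G \subset H -> v' |: tau @: H \in D' ->
  exists2 v, v \in S & (tau v = v') /\ (v |: H \in D).
Proof.
move=> HD GH vHD.
case: hm' => [[hsub' _] _].
have GH' : tau @: G \subset tau @: H by apply: imsetS.
have : v' \in star_verts D' (tau @: G).
  rewrite inE; apply: hsub' vHD _; by rewrite setUS.
case: hiso => _ <- h => /imsetP [v vS ev']; subst v'.
exists v => //; split => //.
have vHS : v |: H \subset S by rewrite subUset sub1set vS sub_S.
have h2 := h _ vHS; rewrite imsetU1 in h2.
have : tau v |: tau @: H \in star D' (tau @: G).
  rewrite inE vHD (setUidPl _) ?vHD //.
  by apply: (subset_trans GH'); exact: subsetUr.
by rewrite -h2 inE => /andP [].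
Qed.

Lemma base_case H : facet d D H -> G \subset H ->
  Rp (phi (xF k d H)) ((-1) ^+ e * phi' (xF k d (tau @: H))).
Proof.
move=> fH GH; have /andP [HD /eqP cH] := fH.
have HS := sub_S HD GH.
have tinjH : {in H &, injective tau} := sub_in2 (subsetP HS) tinj.
have fH' : facet d D' (tau @: H) by rewrite /facet tau_face // card_in_imset // cH eqxx.
case: hphi => _ _ _ hf; case: hphi' => _ _ _ hf'.
rewrite hf // hf' //.
have feinj : injective (fun m : 'I_d => fe H v0 m).
  by move=> i j /(congr1 (pos H)); rewrite !fe_posE // => ?; apply: val_inj.
have tfeinj : injective (fun m : 'I_d => tau (fe H v0 m)).
  by move=> i j /tinjH h; apply: feinj; apply: h; apply: fe_in.
have dA2 := generic_det k tfeinj.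
have hA : forall i j, Rp ((\matrix_(i, m) aK k i (fe H v0 m) : 'M[Kf k d n]_d) i j)
                        ((\matrix_(i, m) aK k i (tau (fe H v0 m)) : 'M[Kf k d n']_d) i j).
  by move=> i j; rewrite !mxE; apply: Rep_a; apply: (subsetP HS); apply: fe_in.
have hdet := Rep_det hA.
rewrite (detF_fe k v0 cH).
have := Rep_mul (@Rep_sign k d n n' tau S (eps H)) (Rep_inv hdet dA2).
rewrite (det_transport k v0 cH tinjH).
have hk := congr1 (fun c : k => FracField.tofrac (c%:MP : {mpoly k[NV d n']})) (hor fH GH).
rewrite /= !(rmorphM, rmorphXn, rmorphN, rmorph1) in hk.
rewrite hk exprD invr_signM.
set s1 := (-1) ^+ e; set s2 := (-1) ^+ eps' _; set s3 := (-1) ^+ inversions _ _.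
set x := (detF k d (tau @: H))^-1.
have sq : s3 * s3 = 1 by rewrite /s3 -expr2 sqrr_sign.
have -> : s1 * (s2 * s3) * (s3 * x) = s1 * (s2 * x) * (s3 * s3) by ring.
by rewrite sq mulr1.
Qed.

Lemma sum_delta (u : 'I_n) : (\sum_(v : 'I_n) ((v == u) : nat))%N = 1%N.
Proof. by rewrite (bigD1 u) //= eqxx big1 // => v /negbTE ->. Qed.

Lemma red_claim b w : [set v | (0 < b v)%N] \in D -> G \subset [set v | (0 < b v)%N] ->
  (\sum_v b v)%N = d -> (1 < b w)%N ->
  (forall b' : 'I_n -> nat, [set v | (0 < b' v)%N] \in D -> G \subset [set v | (0 < b' v)%N] ->
     (\sum_v b' v)%N = d -> (#|[set v | (0 < b v)%N]| < #|[set v | (0 < b' v)%N]|)%N ->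
     Rp (phi (monoZ k d (fun v => v) b')) ((-1) ^+ e * phi' (monoZ k d tau b'))) ->
  Rp (phi (monoZ k d (fun v => v) b)) ((-1) ^+ e * phi' (monoZ k d tau b)).
Proof.
set H := [set v | (0 < b v)%N] => HD GH sb bw IH.
have wH : w \in H by rewrite inE; apply: leq_trans bw.
have H0 : H != set0 by apply/set0Pn; exists w.
have cH : (#|H| < d)%N.
  rewrite -sb -sum_ind (bigD1 w) //= [X in (_ < X)%N](bigD1 w) //= wH.
  rewrite -addSn leq_add // leq_sum // => v _; rewrite inE; by case: (b v).
have [F [FD cF HF]] := facet_above hm HD H0 (ltnW cH).
have GF : G \subset F := subset_trans GH HF.
have FS := sub_S FD GF.
have HS := sub_S HD GH.
have tinjF : {in F &, injective tau} := sub_in2 (subsetP FS) tinj.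
have tinjH : {in H &, injective tau} := sub_in2 (subsetP HS) tinj.
have feinj : injective (fun m : 'I_d => fe F v0 m).
  by move=> i j /(congr1 (pos F)); rewrite !fe_posE // => ?; apply: val_inj.
have tfeinj : injective (fun m : 'I_d => tau (fe F v0 m)).
  by move=> i j /tinjF h; apply: feinj; apply: h; apply: fe_in.
have dA := generic_det k feinj.
have dA2 := generic_det k tfeinj.
have wF : w \in F := subsetP HF w wH.
have hwlt : (pos F w < d)%N by rewrite -cF pos_lt.
pose mw : 'I_d := Ordinal hwlt.
pose c := fun i => invmx (\matrix_(i, m) aK k i (fe F v0 m) : 'M[Kf k d n]_d) mw i.
pose c2 := fun i => invmx (\matrix_(i, m) aK k i (tau (fe F v0 m)) : 'M[Kf k d n']_d) mw i.
have mwE (v : 'I_n) (vF : v \in F) (hv : (pos F v < d)%N) : (mw == Ordinal hv) = (v == w).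
  apply/eqP/eqP => [/(congr1 val) /= h|evw]; last by apply: val_inj; rewrite /= evw.
  by apply: (pos_inj vF wF); rewrite h.
have hc : forall v', v' \in F -> \sum_i c i * aK k i v' = ((v' == (fun v => v) w) : nat)%:R.
  move=> v' vF; have hvlt : (pos F v' < d)%N by rewrite -cF pos_lt.
  have := coef_lemma dA mw (Ordinal hvlt); rewrite /= (fe_pos v0 vF) => ->.
  by rewrite mwE.
have hc2 : forall v', v' \in tau @: F -> \sum_i c2 i * aK k i v' = ((v' == tau w) : nat)%:R.
  move=> v' /imsetP [v vF ->]; have hvlt : (pos F v < d)%N by rewrite -cF pos_lt.
  have := coef_lemma dA2 mw (Ordinal hvlt); rewrite /= (fe_pos v0 vF) => ->.
  by rewrite mwE // (inj_in_eq tinjF vF wF).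
have HF' : [set (fun v => v) x | x in H] \subset F by rewrite imset_id.
have phiE := reduce_step hphi (iota := fun v => v) (b := b) (w := w) (Fs := F)
   (fun x y _ _ h => h) HF' bw sb hc.
have phiE' := reduce_step hphi' (iota := tau) (b := b) (w := w) (Fs := tau @: F)
   tinjH (imsetS _ HF) bw sb hc2.
pose Aset := [set v | (v \notin F) && (v |: H \in D)].
have AS : Aset \subset S.
  apply/subsetP => v; rewrite inE => /andP [_ vHD].
  apply: (subsetP (sub_S vHD _)); first by apply: (subset_trans GH); exact: subsetUr.
  exact: setU11.
have tinjA : {in Aset &, injective tau} := sub_in2 (subsetP AS) tinj.
have eA : [set v' | (v' \notin tau @: F) && (v' |: tau @: H \in D')] = tau @: Aset.
  apply/setP => v'; rewrite inE; apply/andP/imsetP.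
    move=> [nF hD]; have [v vS [ev vHD]] := tau_link_inv HD GH hD.
    exists v => //; rewrite inE vHD andbT.
    by apply: contra nF => vF; rewrite -ev; apply: imset_f.
  move=> [v]; rewrite inE => /andP [vF vHD] ->; split; last exact: tau_link.
  apply/imsetP => -[u uF] /tinj e'.
  have vS : v \in S by apply: (subsetP AS); rewrite inE vF vHD.
  by move: vF; rewrite e' // ?uF //; apply: (subsetP FS).
rewrite phiE phiE'.
rewrite (eq_bigl (fun v' => v' \in Aset)); last by move=> v'; rewrite imset_id inE.
rewrite (eq_bigl (fun v' => v' \in tau @: Aset)); last by move=> v'; rewrite -eA inE.
rewrite big_imset //= mulrN mulr_sumr; apply: Rep_opp; apply: Rep_sum => v vA.
rewrite mulrCA; apply: Rep_mul.
  apply: Rep_sum => i _; apply: Rep_mul.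
    apply: Rep_invmx => //.
    by move=> a m; rewrite !mxE; apply: Rep_a; apply: (subsetP FS); apply: fe_in.
  by apply: Rep_a; apply: (subsetP AS).
move: vA; rewrite inE => /andP [vF vHD].
have vH : v \notin H by apply: contra vF; apply: (subsetP HF).
pose b0 := (fun u => b u - (u == w))%N.
pose b' := (fun u => b0 u + (u == v))%N.
have e1 : 'X_v * monoZ k d (fun x => x) b0 = monoZ k d (fun x => x) b'.
  by rewrite /b' monoZD monoZ1 mulrC.
have e2 : 'X_(tau v) * monoZ k d tau b0 = monoZ k d tau b'.
  by rewrite /b' monoZD monoZ1 mulrC.
rewrite e1 e2.
have sE : [set u | (0 < b' u)%N] = v |: H.
  apply/setP => u; rewrite !inE /b' /b0.
  case: (eqVneq u v) => [->|nv] /=; first by rewrite addn1.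
  rewrite addn0; case: (eqVneq u w) => [->|nw] /=; last by rewrite subn0.
  by rewrite subn_gt0 (ltnW bw) (leq_trans _ bw).
have eb : (\sum_u b u = 1 + \sum_u b0 u)%N.
  rewrite -(sum_delta w) -big_split /=; apply: eq_bigr => u _.
  rewrite /b0; case: eqP => [->|_] /=; last by rewrite subn0.
  by rewrite subnKC // ltnW.
have h1 : [set u | (0 < b' u)%N] \in D by rewrite sE.
have h2 : G \subset [set u | (0 < b' u)%N].
  by rewrite sE; apply: (subset_trans GH); exact: subsetUr.
have h3 : (\sum_u b' u)%N = d by rewrite /b' big_split /= sum_delta addnC -eb.
have h4 : (#|H| < #|[set u | (0 < b' u)%N]|)%N by rewrite sE cardsU1 vH.
exact: (IH b' h1 h2 h3 h4).
Qed.

Lemma card_supp (b : 'I_n -> nat) : (#|[set v | (0 < b v)%N]| <= \sum_v b v)%N.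
Proof. by rewrite -sum_ind leq_sum // => v _; rewrite inE; case: (b v). Qed.

Lemma base_claim b : [set v | (0 < b v)%N] \in D -> G \subset [set v | (0 < b v)%N] ->
  (\sum_v b v)%N = d -> (forall w, ~~ (1 < b w)%N) ->
  Rp (phi (monoZ k d (fun v => v) b)) ((-1) ^+ e * phi' (monoZ k d tau b)).
Proof.
set H := [set v | (0 < b v)%N] => HD GH sb nw.
have eb : b =1 (fun v => (v \in H) : nat).
  move=> v; have := nw v; rewrite inE; case: (b v) => [|[|]] //.
have cH : #|H| = d by rewrite -sum_ind -sb; apply: eq_bigr => v _; rewrite eb.
have HS := sub_S HD GH.
have tinjH : {in H &, injective tau} := sub_in2 (subsetP HS) tinj.
rewrite (monoZ_ext k d (fun v => v) eb) (monoZ_set k d (iota := fun v => v) (fun x y _ _ h => h)).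
rewrite (monoZ_ext k d tau eb) (monoZ_set k d tinjH) imset_id.
by apply: base_case => //; rewrite /facet HD cH eqxx.
Qed.

Lemma main_claim b : [set v | (0 < b v)%N] \in D -> G \subset [set v | (0 < b v)%N] ->
  (\sum_v b v)%N = d ->
  Rp (phi (monoZ k d (fun v => v) b)) ((-1) ^+ e * phi' (monoZ k d tau b)).
Proof.
suff h : forall m (b : 'I_n -> nat), (d - #|[set v | (0 < b v)%N]| <= m)%N ->
  [set v | (0 < b v)%N] \in D -> G \subset [set v | (0 < b v)%N] ->
  (\sum_v b v)%N = d ->
  Rp (phi (monoZ k d (fun v => v) b)) ((-1) ^+ e * phi' (monoZ k d tau b)).
  by apply: h (leqnn _).
elim=> [|m IH] {}b hme HD GH sb.
  case: (boolP [exists w, (1 < b w)%N]) => [/existsP [w bw]|/existsPn nw].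
    apply: (red_claim HD GH sb bw) => b' _ _ sb' clt.
    have := card_supp b'; rewrite sb' => c2.
    move: hme; rewrite leqn0 subn_eq0 => hme.
    by have := leq_ltn_trans hme clt; rewrite ltnNge c2.
  exact: base_claim.
case: (boolP [exists w, (1 < b w)%N]) => [/existsP [w bw]|/existsPn nw].
  apply: (red_claim HD GH sb bw) => b' HD' GH' sb' clt.
  apply: IH => //; have := card_supp b'; rewrite sb' => c2.
  apply: leq_trans (leq_sub2l d clt) _; rewrite subnS.
  by move: hme; case: (d - _)%N.
exact: base_claim.
Qed.
End Main.

Lemma monoZ_push (k : fieldType) d n N s (j : 'I_s -> 'I_n) (b : 'I_s -> nat) (iota : 'I_n -> 'I_N) :
  monoZ k d iota (fun v => \sum_(m | j m == v) b m)%N = \prod_(m < s) 'X_(iota (j m)) ^+ b m.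
Proof.
rewrite /monoZ (partition_big j xpredT) //=; apply: eq_bigr => v _.
rewrite expr_sum; apply: eq_bigr => m /eqP ->; by [].
Qed.


Unset Implicit Arguments.
Theorem lemma2p8 (k : fieldType) (d n n' s : nat)
  (D : {set {set 'I_n}}) (D' : {set {set 'I_n'}})
  (eps : {set 'I_n} -> bool) (eps' : {set 'I_n'} -> bool)
  (j : 'I_s -> 'I_n) (tau : 'I_n -> 'I_n') (b : 'I_s -> nat) (e : bool)
  (phi : {mpoly (Kf k d n)[n]} -> Kf k d n)
  (phi' : {mpoly (Kf k d n')[n']} -> Kf k d n') :
  (2 <= d)%N ->
  homology_manifold k d D -> connected_cx D -> oriented k d D eps ->
  homology_manifold k d D' -> connected_cx D' -> oriented k d D' eps' ->
  injective j ->
  [set j m | m : 'I_s] \in D ->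
  [set tau (j m) | m : 'I_s] \in D' ->
  star_iso D D' [set j m | m : 'I_s] [set tau (j m) | m : 'I_s] tau ->
  (forall m, (0 < b m)%N) -> (\sum_(m < s) b m)%N = d ->
  (* epsilon = (-1)^e compares the two orientations of Star_D(G) *)
  (forall F, facet d D F -> [set j m | m : 'I_s] \subset F ->
     (-1) ^+ eps F = (-1) ^+ e * (-1) ^+ (eps' (tau @: F) + inversions tau F) :> k) ->
  is_deg_map D eps phi -> is_deg_map D' eps' phi' ->
  exists p q : {mpoly k[NV d n]},
    [/\ only_vars (star_verts D [set j m | m : 'I_s]) p,
        only_vars (star_verts D [set j m | m : 'I_s]) q,
        q != 0,
        phi (mono j b) = FracField.tofrac p / FracField.tofrac q
      & phi' (mono (fun m => tau (j m)) b)
        = (-1) ^+ e * (FracField.tofrac (transport tau p) / FracField.tofrac (transport tau q))].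
Proof.
move=> hd hm _ _ hm' _ _ jinj GD _ hiso bpos sb hor hphi hphi'.
set G := [set j m | m : 'I_s] in GD hiso hor *.
have eG : [set tau (j m) | m : 'I_s] = tau @: G by rewrite -imset_comp.
rewrite eG in hiso.
have hs : (0 < s)%N.
  case: (posnP s) => // s0; exfalso.
  suff : (\sum_(m < s) b m)%N = 0 by rewrite sb => d0; move: hd; rewrite d0.
  by apply: big1 => -[m hm0]; exfalso; move: hm0; rewrite s0.
pose v0 := j (Ordinal hs).
pose B := (fun v => \sum_(m | j m == v) b m)%N.
have supB : [set v | (0 < B v)%N] = G.
  apply/setP => v; rewrite inE; apply/idP/imsetP.
    rewrite /B; case: (pickP (fun m => j m == v)) => [m /eqP <-|none]; first by exists m.
    by rewrite big_pred0.
  move=> [m _ ->]; rewrite /B (bigD1 m) //=; apply: leq_trans (bpos m) _; exact: leq_addr.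
have sB : (\sum_v B v)%N = d by rewrite -sb /B (partition_big j xpredT).
have h1 : [set v | (0 < B v)%N] \in D by rewrite supB.
have h2 : G \subset [set v | (0 < B v)%N] by rewrite supB.
have := main_claim v0 hm hm' hiso hor hphi hphi' h1 h2 sB.
rewrite /mono !monoZ_push.
move=> [p [q [hp hq q0 tq0 [ex ey]]]].
exists p, q; split => //.
by rewrite -ey signrMK.
Qed.
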